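(* Consider smoothed MaxSat/$k$-Flip on a CNF formula with $n$ variables and $m$ clauses, where each clause weight $w_i$ is drawn independently from a distribution with density $f_i:[0,1]\to[0,\phi]$, and let $B$ be the maximum number of clauses in which any variable occurs. Then the expected maximum number of iterations of local search (over all initial assignments and all improving sequences) is $O(3^{kB}n^k m^2\phi)$, with an absolute hidden constant.
   Context: MaxSat/$k$-Flip: given a CNF formula with clauses $C_1,\dots,C_m$ over Boolean variables $x_1,\dots,x_n$ and clause weights $w_1,\dots,w_m$, the weight of a truth assignment is the total weight of satisfied clauses; the $k$-Flip neighbours of an assignment are those obtained by changing the truth value of at most $k$ variables; a solution is an assignment with no neighbour of strictly larger weight. Local search repeatedly moves to a strictly better neighbour. *)

(* Defs.v *)
From HB Require Import structures.
From mathcomp Require Import all_boot all_order all_algebra.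
From mathcomp Require Import all_classical all_reals all_analysis.
Set Implicit Arguments. Unset Strict Implicit. Unset Printing Implicit Defensive.
Import Order.TTheory GRing.Theory Num.Theory.
Local Open Scope ring_scope.
Local Open Scope classical_set_scope.

(* A CNF formula with m clauses over n variables is C : 'I_m -> clause n. *)
Definition literal (n : nat) := ('I_n * bool)%type.
Definition clause (n : nat) := seq (literal n).
Definition assignment (n : nat) := {ffun 'I_n -> bool}.

Definition clause_sat n (c : clause n) (a : assignment n) : bool :=
  has (fun l : literal n => a l.1 == l.2) c.

Definition weight (R : realType) n m (C : 'I_m -> clause n) (w : nat -> R)
    (a : assignment n) : R :=
  \sum_(i < m | clause_sat (C i) a) w i.

Definition kflip_nbr n (k : nat) (a b : assignment n) : bool :=
  (#|[set x : 'I_n | a x != b x]| <= k)%N.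

Definition improving_step (R : realType) n m k (C : 'I_m -> clause n)
    (w : nat -> R) (a b : assignment n) : bool :=
  kflip_nbr k a b && (weight C w a < weight C w b).

Definition improving_run (R : realType) n m k (C : 'I_m -> clause n)
    (w : nat -> R) (a0 : assignment n) (s : seq (assignment n)) : bool :=
  path (improving_step k C w) a0 s.

Definition max_iterations (R : realType) n m k (C : 'I_m -> clause n)
    (w : nat -> R) : \bar R :=
  ereal_sup [set ((size s)%:R)%:E | s in
     [set s : seq (assignment n) | exists a0, improving_run k C w a0 s]].

Definition max_occurrences n m (C : 'I_m -> clause n) : nat :=
  \max_(x : 'I_n) #|[set i : 'I_m | x \in [seq l.1 | l <- C i]]|.

(* Expectation of F(w_0, ..., w_{m-1}) where the w_i are independent with
   densities f i on [0,1]: the iterated Lebesgue integral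
   \int_[0,1] ... \int_[0,1] F(w) * prod_i f_i(w_i) dw. *)
Fixpoint expect_indep (R : realType) (m : nat) (f : nat -> R -> R)
    (F : (nat -> R) -> \bar R) : \bar R :=
  match m with
  | 0 => F (fun _ => 0)
  | m'.+1 =>
      (\int[@lebesgue_measure R]_(x in `[0%R, 1%R])
         ((f m' x)%:E * expect_indep m' f
            (fun w => F (fun i => if i == m' then x else w i))))%E
  end.

Definition density_bounded (R : realType) (f : R -> R) (phi : R) : Prop :=
  [/\ measurable_fun (`[0%R, 1%R] : set R) f,
      (forall x, x \in `[0%R, 1%R] -> 0 <= f x <= phi) &
      (\int[@lebesgue_measure R]_(x in `[0%R, 1%R]) (f x)%:E = 1)%E].

(* Main.v *)
Require Import Defs.
From HB Require Import structures.
From mathcomp Require Import all_boot all_order all_algebra.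
From mathcomp Require Import all_classical all_reals all_analysis.
From mathcomp Require Import measurable_realfun.
From mathcomp Require Import ring lra.
Import Order.TTheory GRing.Theory Num.Theory.
Local Open Scope ring_scope.
Local Open Scope classical_set_scope.
Set Implicit Arguments. Unset Strict Implicit. Unset Printing Implicit Defensive.

Lemma mono_int (R : realType) (D : set R) (f1 f2 : R -> \bar R) :
  (forall x, D x -> (0 <= f1 x)%E) -> (forall x, D x -> (f1 x <= f2 x)%E) ->
  (\int[@lebesgue_measure R]_(x in D) f1 x <= \int[@lebesgue_measure R]_(x in D) f2 x)%E.
Proof.
move=> f10 f12.
have f20 : forall x, D x -> (0 <= f2 x)%E by move=> x Dx; exact: le_trans (f10 x Dx) (f12 x Dx).
rewrite !ge0_integralE //.
apply: ge_ereal_sup => _ [h /= hf <-]; apply: ereal_sup_ubound; exists h => //= x.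
apply: (le_trans (hf x)); rewrite /patch; case: ifP => // /[1!inE] Dx; exact: f12.
Qed.

Definition upd (R : realType) (w : nat -> R) (l : nat) (x : R) : nat -> R :=
  fun i => if i == l then x else w i.

Definition inP (R : realType) (w : nat -> R) := forall i, 0 <= w i <= 1.

Lemma inP_upd (R : realType) (w : nat -> R) l x : inP w -> 0 <= x <= 1 -> inP (upd w l x).
Proof. by move=> Pw Px i; rewrite /upd; case: ifP. Qed.

Lemma itv01 (R : realType) (x : R) : (`[0%R, 1%R] : set R) x -> 0 <= x <= 1.
Proof. by rewrite /= in_itv. Qed.

Lemma expect_ge0 (R : realType) (f : nat -> R -> R) phi l F :
  (forall i, (i < l)%N -> density_bounded (f i) phi) ->
  (forall w, inP w -> (0 <= F w)%E) -> (0 <= expect_indep l f F)%E.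
Proof.
elim: l F => [|l IH] F hf F0 /=.
  by apply: F0 => i; rewrite lexx ler01.
apply: integral_ge0 => x Px'; have Px := itv01 Px'.
have [_ hfx _] := hf l (ltnSn l).
apply: mule_ge0.
  by rewrite lee_fin; case/andP: (hfx x (mem_set Px')).
apply: IH => [i il|w Pw]; first by apply: hf; rewrite ltnS ltnW.
exact: (F0 (upd w l x) (inP_upd l Pw Px)).
Qed.

Lemma upd_comm (R : realType) (w : nat -> R) a b x y : a != b ->
  upd (upd w a x) b y = upd (upd w b y) a x.
Proof.
move=> ab; apply/funext => i; rewrite /upd.
case: (eqVneq i a) => [ia|ia]; case: (eqVneq i b) => [ib|ib] //.
by move: ab; rewrite -ia -ib eqxx.
Qed.

Lemma upd_upd (R : realType) (w : nat -> R) a x y : upd (upd w a x) a y = upd w a y.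
Proof. by apply/funext => i; rewrite /upd; case: (i == a). Qed.

Lemma int_fc (R : realType) (f : R -> R) phi (c : \bar R) : density_bounded f phi -> (0 <= c)%E ->
  (\int[@lebesgue_measure R]_(x in `[0%R,1%R]) ((f x)%:E * c) = c)%E.
Proof.
case=> mf hf i1 c0; rewrite ge0_integralZr //.
- by rewrite i1 mul1e.
- exact/measurable_realfun.measurable_EFinP.
- by move=> x Dx; rewrite lee_fin; case/andP: (hf x (mem_set Dx)).
Qed.

Lemma key (R : realType) (f : nat -> R -> R) (phi : R) (I : Type) (s : seq I)
  (j : I -> nat) (M : I -> R) l : forall (G : I -> (nat -> R) -> \bar R) F,
  (forall i, (i < l)%N -> density_bounded (f i) phi) ->
  (forall t, 0 <= M t) ->
  (forall t w, (0 <= G t w)%E) ->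
  (forall t w w', (forall i, (j t <= i)%N -> w i = w' i) -> G t w = G t w') ->
  (forall t w, measurable_fun (`[0%R,1%R] : set R) (fun y => G t (upd w (j t) y))) ->
  (forall t w, (j t < l)%N -> (\int[@lebesgue_measure R]_(y in `[0%R,1%R])
       ((f (j t) y)%:E * G t (upd w (j t) y)) <= (M t)%:E)%E) ->
  (forall w, inP w -> (0 <= F w)%E /\ (F w <= \sum_(t <- s) G t w)%E) ->
  (expect_indep l f F <= \sum_(t <- s)
      (if (l <= j t)%N then G t (fun _ => 0%R) else (M t)%:E))%E.
Proof.
elim: l => [|l IH] G F hf M0 G0 Gdep Gmeas Gbd FG /=.
  have P0 : inP (fun _ : nat => (0:R)) by move=> i; rewrite lexx ler01.
  by case: (FG _ P0).
have hfl := hf l (ltnSn l).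
pose U t x := if (l <= j t)%N then G t (upd (fun _ => 0%R) l x) else (M t)%:E.
have U0 t x : (0 <= U t x)%E by rewrite /U; case: ifP => _; rewrite ?lee_fin.
apply: (@le_trans _ _ (\int[@lebesgue_measure R]_(x in `[0%R,1%R])
   ((f l x)%:E * \sum_(t <- s) U t x))%E).
  apply: mono_int => x Dx.
    have [_ hfx _] := hfl.
    apply: mule_ge0; first by rewrite lee_fin; case/andP: (hfx x (mem_set Dx)).
    apply: expect_ge0 => [i il|w Pw]; first by apply: hf; rewrite ltnS ltnW.
    exact: (FG _ (inP_upd l Pw (itv01 Dx))).1.
  have [_ hfx _] := hfl.
  apply: lee_wpmul2l; first by rewrite lee_fin; case/andP: (hfx x (mem_set Dx)).
  apply: (IH (fun t w => G t (upd w l x))).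
  - by move=> i il; apply: hf; rewrite ltnS ltnW.
  - exact: M0.
  - by move=> t w; exact: G0.
  - move=> t w w' ww; apply: Gdep => i ji; rewrite /upd; case: ifP => // _; exact: ww.
  - move=> t w; case: (eqVneq (j t) l) => [jl|jl].
      have -> : (fun y => G t (upd (upd w (j t) y) l x)) = cst (G t (upd w l x)).
        by apply/funext => y; rewrite /= jl upd_upd.
      exact: measurable_cst.
    have -> : (fun y => G t (upd (upd w (j t) y) l x)) = (fun y => G t (upd (upd w l x) (j t) y)).
      by apply/funext => y; rewrite upd_comm.
    exact: Gmeas.
  - move=> t w jtl.
    have jl : j t != l by rewrite neq_ltn jtl.
    under eq_integral do rewrite upd_comm //.
    apply: Gbd; exact: ltn_trans jtl (ltnSn l).
  - move=> w Pw; exact: FG (inP_upd l Pw (itv01 Dx)).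
have [mf hfx _] := hfl.
have fD x : `[0%R,1%R] x -> (0 <= (f l x)%:E)%E.
  by move=> Dx; rewrite lee_fin; case/andP: (hfx x (mem_set Dx)).
under eq_integral => x Dx do rewrite ge0_sume_distrr //.
rewrite ge0_integral_sum //; last 2 first.
- move=> t; apply: emeasurable_funM; first exact/measurable_realfun.measurable_EFinP.
  rewrite /U; case: (leqP l (j t)) => ljt; last exact: measurable_cst.
  case: (ltngtP l (j t)) ljt => // [ltj|eqj] _.
    have -> : (fun x => G t (upd (fun=> 0%R) l x)) = cst (G t (fun=> 0%R)).
      apply/funext => x; apply: Gdep => i ji; rewrite /upd; case: eqVneq => // il.
      by move: ltj; rewrite -il ltnNge ji.
    exact: measurable_cst.
  rewrite eqj; exact: Gmeas.
- move=> t x Dx; apply: mule_ge0; [exact: fD|exact: U0].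
apply: lee_sum => t _; rewrite /U.
case: (ltngtP l (j t)) => [ltj|gtj|eqj].
- under eq_integral => x _.
    rewrite (Gdep t (upd (fun=> 0%R) l x) (fun=> 0%R)); last first.
      by move=> i ji; rewrite /upd; case: eqVneq => // il; move: ltj; rewrite -il ltnNge ji.
    over.
  by rewrite (int_fc hfl).
- by rewrite (int_fc hfl) // lee_fin.
- by rewrite eqj; apply: Gbd; rewrite -eqj.
Qed.

Lemma phi_ge0 (R : realType) (f : R -> R) phi : density_bounded f phi -> 0 <= phi.
Proof.
case=> _ hf _.
have h0 : (`[0%R, 1%R] : set R) 0 by rewrite /= in_itv /= lexx ler01.
have /andP[h1 h2] := hf 0 (mem_set h0).
exact: le_trans h1 h2.
Qed.

Lemma meas_Kind (R : realType) (A : set R) (K : R) : measurable A ->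
  measurable_fun (`[0%R,1%R] : set R) (fun y => (K * \1_A y)%:E).
Proof.
move=> mA; apply/measurable_EFinP.
have -> : (fun x : R => K * \1_A x) = (cst K \* (\1_A : R -> R)) by [].
apply: measurable_funM; [exact: measurable_cst|exact: measurable_indic].
Qed.

Lemma int_bound (R : realType) (f : R -> R) phi (A : set R) (K : R) :
  density_bounded f phi -> measurable A -> 0 <= K ->
  (\int[@lebesgue_measure R]_(y in `[0%R,1%R]) ((f y)%:E * (K * \1_A y)%:E)
     <= (phi * K)%:E * lebesgue_measure A)%E.
Proof.
move=> hd mA K0; have phi0 := phi_ge0 hd; case: hd => mf hf _.
apply: (@le_trans _ _ (\int[@lebesgue_measure R]_(y in `[0%R,1%R]) ((phi * K) * \1_A y)%:E)%E).
  apply: mono_int => x Dx.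
    have /andP[f0 _] := hf x (mem_set Dx).
    by rewrite -EFinM lee_fin mulr_ge0 // mulr_ge0.
  have /andP[f0 fphi] := hf x (mem_set Dx).
  rewrite -EFinM lee_fin -mulrA; apply: ler_wpM2r => //.
  by rewrite mulr_ge0.
under eq_integral do rewrite EFinM.
rewrite ge0_integralZl //; last 2 first.
- by apply: measurableT_comp => //; exact: measurable_indic.
- by rewrite lee_fin mulr_ge0.
rewrite integral_indic //; apply: lee_wpmul2l; first by rewrite lee_fin mulr_ge0.
apply: le_measure; rewrite ?inE //=; exact: measurableI.
Qed.


Definition slab (R : realType) (L : R) : set R := [set z | 0 < z <= L].

Lemma in_slab (R : realType) (L z : R) : (z \in slab L) = (0 < z <= L).
Proof. by apply/idP/idP => [/set_mem|?]; [|apply/mem_set]. Qed.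

Lemma slab_core (R : realType) (f : R -> R) phi (c e K L : R) (A : set R) :
  density_bounded f phi -> 0 <= K -> measurable A -> (@lebesgue_measure R) A = L%:E ->
  (forall y, \1_(slab L) (c + e * y) = \1_A y :> R) ->
  (\int[@lebesgue_measure R]_(y in `[0%R,1%R])
     ((f y)%:E * (K * \1_(slab L) (c + e * y))%:E) <= (phi * K * L)%:E)%E.
Proof.
move=> hd K0 mA lA hA.
apply: (le_trans (@mono_int R _ _ (fun y => (f y)%:E * (K * \1_A y)%:E)%E _ _)).
- move=> y Dy; rewrite -EFinM lee_fin; case: hd => _ hf _.
  have /andP[h1 _] := hf y (mem_set Dy).
  by rewrite mulr_ge0 // mulr_ge0 // indicE.
- by move=> y _; rewrite hA.
apply: le_trans (int_bound hd mA K0) _.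
by rewrite lA -EFinM.
Qed.

Lemma slab_bd (R : realType) (f : R -> R) phi (c e K L : R) :
  density_bounded f phi -> (e = 1 \/ e = -1) -> 0 <= K -> 0 < L ->
  (\int[@lebesgue_measure R]_(y in `[0%R,1%R])
     ((f y)%:E * (K * \1_(slab L) (c + e * y))%:E) <= (phi * K * L)%:E)%E.
Proof.
move=> hd he K0 L0.
case: he => ->.
  apply: (slab_core (A := [set` `]-c, -c + L]%R]) hd K0); first exact: measurable_itv.
    rewrite lebesgue_measure_itv /= lte_fin ltrDl L0.
    by rewrite -EFinD addrAC subrr add0r.
  move=> y; rewrite /indic; congr (_%:R).
  congr (nat_of_bool _); rewrite in_slab !mem_setE /= ?in_itv /=; apply/idP/idP => /andP[h1 h2]; apply/andP; split; lra.
apply: (slab_core (A := [set` `[c - L, c - L + L[%R]) hd K0); first exact: measurable_itv.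
  rewrite lebesgue_measure_itv /= lte_fin ltrDl L0.
  by rewrite -EFinD addrAC subrr add0r.
move=> y; rewrite /indic; congr (_%:R).
congr (nat_of_bool _); rewrite in_slab !mem_setE /= ?in_itv /=; apply/idP/idP => /andP[h1 h2]; apply/andP; split; lra.
Qed.

Local Close Scope classical_set_scope.

Definition dec (R : realType) (g : 'I_3) : R :=
  if val g == 1%N then 1 else if val g == 2%N then -1 else 0.

Definition lin (R : realType) m (g : {ffun 'I_m -> 'I_3}) (w : nat -> R) : R :=
  \sum_(i < m) dec R (g i) * w i.

Definition code n m (C : 'I_m -> clause n) (a b : assignment n) : {ffun 'I_m -> 'I_3} :=
  [ffun i => if clause_sat (C i) b && ~~ clause_sat (C i) a then inord 1
             else if clause_sat (C i) a && ~~ clause_sat (C i) b then inord 2 else ord0].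

Lemma dec_code (R : realType) n m (C : 'I_m -> clause n) a b i :
  dec R (code C a b i) = (clause_sat (C i) b)%:R - (clause_sat (C i) a)%:R.
Proof.
rewrite /dec ffunE.
by case: (clause_sat (C i) b); case: (clause_sat (C i) a); rewrite /= ?inordK //= ?subrr ?subr0 ?sub0r.
Qed.

Lemma weight_sat (R : realType) n m (C : 'I_m -> clause n) (w : nat -> R) a :
  weight C w a = \sum_(i < m) (clause_sat (C i) a)%:R * w i.
Proof.
rewrite /weight big_mkcond /=; apply: eq_bigr => i _.
by case: (clause_sat (C i) a); rewrite ?mul1r ?mul0r.
Qed.

Lemma lin_code (R : realType) n m (C : 'I_m -> clause n) (w : nat -> R) a b :
  lin (code C a b) w = weight C w b - weight C w a.
Proof.
rewrite /lin !weight_sat -sumrB; apply: eq_bigr => i _.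
by rewrite dec_code mulrBl.
Qed.

Lemma weight_ge0 (R : realType) n m (C : 'I_m -> clause n) (w : nat -> R) a :
  inP w -> 0 <= weight C w a.
Proof. by move=> Pw; apply: sumr_ge0 => i _; case/andP: (Pw i). Qed.

Lemma weight_le (R : realType) n m (C : 'I_m -> clause n) (w : nat -> R) a :
  inP w -> weight C w a <= m%:R.
Proof.
move=> Pw; rewrite weight_sat.
apply: (@le_trans _ _ (\sum_(i < m) (1:R))); last by rewrite sumr_const card_ord.
apply: ler_sum => i _; case/andP: (Pw i) => h0 h1.
by case: (clause_sat (C i) a); rewrite ?mul1r ?mul0r.
Qed.

Lemma clause_sat_eq n (c : clause n) (a b : assignment n) :
  (forall l, l \in c -> a l.1 = b l.1) -> clause_sat c a = clause_sat c b.
Proof. by move=> h; apply: eq_in_has => l /h ->. Qed.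

Definition satset n m (C : 'I_m -> clause n) (a : assignment n) : {set 'I_m} :=
  [set i | clause_sat (C i) a].

Lemma run_size (R : realType) n m k (C : 'I_m -> clause n) (w : nat -> R) a0 s :
  improving_run k C w a0 s -> (size s < 2 ^ m)%N.
Proof.
move=> hr.
have hp : path (fun a b => weight C w a < weight C w b) a0 s.
  by apply: sub_path hr => a b /andP[].
have hs : sorted <%R (map (weight C w) (a0 :: s)).
  by rewrite /= path_map.
have hu : uniq (map (weight C w) (a0 :: s)).
  by apply: (sorted_uniq (@lt_trans _ _) (@ltxx _ _)).
have hW : map (weight C w) (a0 :: s) =
    map (fun S : {set 'I_m} => \sum_(i in S) w i) (map (satset C) (a0 :: s)).
  rewrite -map_comp; apply: eq_map => a /=; rewrite /weight.
  by apply: eq_bigl => i; rewrite /satset inE.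
rewrite hW in hu; have hu' := map_uniq hu.
have := uniq_leq_size hu' (s2 := enum (powerset [set: 'I_m])) _.
rewrite size_map /= -cardE card_powerset cardsT card_ord; apply.
by move=> S _; rewrite mem_enum powersetE; exact: finset.subsetT.
Qed.

Lemma run_sum (R : realType) n m k (C : 'I_m -> clause n) (w : nat -> R) (N : R) :
  (forall a b, improving_step k C w a b -> m%:R < N * (weight C w b - weight C w a)) ->
  forall s a0, improving_run k C w a0 s -> s != [::] ->
  (size s)%:R * m%:R < N * (weight C w (last a0 s) - weight C w a0).
Proof.
move=> H; elim=> [//|b t IH] a0 /= /andP[hab hp] _.
case: (eqVneq t [::]) => [->|tn].
  by rewrite /= mul1r; exact: H.
have := IH b hp tn; have := H _ _ hab.
rewrite -[(size t).+1]addn1 natrD mulrDl mul1r => h1 h2.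
have -> : weight C w (last b t) - weight C w a0 =
   (weight C w (last b t) - weight C w b) + (weight C w b - weight C w a0) by rewrite addrA subrK.
by rewrite mulrDr; exact: ltrD.
Qed.

Lemma run_gain (R : realType) n m k (C : 'I_m -> clause n) (w : nat -> R) a0 s :
  improving_run k C w a0 s -> inP w -> s != [::] ->
  exists a b, improving_step k C w a b /\
     (size s)%:R * (weight C w b - weight C w a) <= m%:R.
Proof.
move=> hr Pw sn.
case: (pselect (exists a b, improving_step k C w a b /\
     (size s)%:R * (weight C w b - weight C w a) <= m%:R)) => // hno.
have H : forall a b, improving_step k C w a b ->
    m%:R < (size s)%:R * (weight C w b - weight C w a).
  move=> a b hab; rewrite ltNge; apply/negP => hle; apply: hno; by exists a, b.
have := run_sum H hr sn.
have hl : (weight C w (last a0 s) - weight C w a0) <= m%:R.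
  have h1 := weight_le C (last a0 s) Pw; have h2 := weight_ge0 C a0 Pw.
  rewrite -[X in _ <= X]subr0; exact: lerB.
have hN : 0 <= (size s)%:R :> R by [].
move=> h; have := lt_le_trans h (ler_wpM2l hN hl); by rewrite ltxx.
Qed.

Definition occ n m (C : 'I_m -> clause n) (x : 'I_n) : {set 'I_m} :=
  [set i | x \in [seq l.1 | l <- C i]].

Definition Tset n m k (C : 'I_m -> clause n) (u : {ffun 'I_k -> 'I_n}) : {set 'I_m} :=
  \bigcup_(i < k) occ C (u i).

Lemma enum_diff n k (a b : assignment n) : kflip_nbr k a b -> a != b ->
  exists u : {ffun 'I_k -> 'I_n}, forall x, a x != b x -> exists i, u i = x.
Proof.
move=> hk ab.
set D := [set x : 'I_n | a x != b x].
have [x0 Dx0] : exists x0, x0 \in D.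
  case: (pselect (exists x0, x0 \in D)) => // hn; move/eqP: ab; case.
  apply/ffunP => x; apply/eqP; apply/negPn/negP => hx; apply: hn; exists x.
  by rewrite inE.
exists [ffun i : 'I_k => nth x0 (enum D) i] => x hx.
have xD : x \in D by rewrite inE.
have hi : (index x (enum D) < k)%N.
  apply: leq_trans hk.
  have -> : #|[set x1 | a x1 != b x1]%classic| = #|D|.
    apply: eq_card => y; rewrite inE; apply/idP/idP => [/set_mem //|h]; exact: mem_set.
  by rewrite cardE index_mem mem_enum.
exists (Ordinal hi); by rewrite ffunE /= nth_index // mem_enum.
Qed.

Lemma code_support n m k (C : 'I_m -> clause n) (a b : assignment n) (u : {ffun 'I_k -> 'I_n}) :
  (forall x, a x != b x -> exists i, u i = x) ->
  code C a b \in pffun_on ord0 (Tset C u) predT.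
Proof.
move=> htt; apply/pffun_onP; split; last by move=> y _.
apply/fintype.subsetP => c; rewrite inE /= => hc.
have hsat : clause_sat (C c) a != clause_sat (C c) b.
  apply/negP => /eqP he; move: hc; rewrite ffunE he.
  by case: (clause_sat (C c) b); rewrite ?andbF ?eqxx.
have [l lC hl] : exists2 l, l \in C c & a l.1 != b l.1.
  case: (pselect (exists2 l, l \in C c & a l.1 != b l.1)) => // hn.
  move: hsat; rewrite (clause_sat_eq (c := C c) (b := b)) ?eqxx // => l lC.
  apply/eqP/negPn/negP => hl; apply: hn; by exists l.
have [i hi] := htt _ hl.
apply/bigcupP; exists i => //; rewrite inE hi.
by apply/mapP; exists l.
Qed.


Definition idx n m k (C : 'I_m -> clause n) :
  seq ({ffun 'I_k -> 'I_n} * ({ffun 'I_m -> 'I_3} * nat)) :=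
  [seq (u, gs) | u <- enum {: {ffun 'I_k -> 'I_n}},
     gs <- [seq (g, s) | g <- enum (pffun_on ord0 (Tset C u) predT), s <- iota 0 m.+1]].

Definition GG (R : realType) n m k (t : {ffun 'I_k -> 'I_n} * ({ffun 'I_m -> 'I_3} * nat))
   (w : nat -> R) : R :=
  (2:R) ^+ t.2.2.+1 * \1_(slab (m%:R / 2 ^+ t.2.2)) (lin t.2.1 w).

Lemma GG_ge0 (R : realType) n m k t (w : nat -> R) : 0 <= @GG R n m k t w.
Proof. by rewrite /GG mulr_ge0 // indicE. Qed.

Lemma sum_ge_term (R : realType) (I : eqType) (s : seq I) (F : I -> R) (t0 : I) :
  t0 \in s -> (forall t, 0 <= F t) -> F t0 <= \sum_(t <- s) F t.
Proof.
move=> ts F0; rewrite (perm_big _ (perm_to_rem ts)) big_cons.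
by rewrite lerDl sumr_ge0.
Qed.

Lemma choose_s (R : realType) (m N : nat) (g : R) : (0 < N)%N -> (N < 2 ^ m)%N -> 0 < g ->
  N%:R * g <= m%:R -> exists s, [/\ (s <= m)%N, g <= m%:R / 2 ^+ s & N%:R <= (2:R) ^+ s.+1].
Proof.
move=> N0 Nm g0 hN.
pose P := fun s => ((2:R) ^+ s * g <= m%:R) && (s <= m)%N.
have exP : exists s, P s.
  exists 0%N; rewrite /P expr0 mul1r leq0n andbT.
  by apply: le_trans hN; rewrite ler_pMl // ler1n.
have ubP : forall s, P s -> (s <= m)%N by move=> s /andP[].
case: (@ex_maxnP P m exP ubP) => s /andP[hs sm] hmax.
exists s; split => //.
  by rewrite ler_pdivlMr ?exprn_gt0 // mulrC.
case: (ltngtP s m) sm => // [sltm|->] _; last first.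
  apply: (@le_trans _ _ (2 ^ m)%:R); first by rewrite ler_nat ltnW.
  by rewrite natrX ler_eXn2l // ?ltr1n // leqnSn.
have hnot : ~~ P s.+1 by apply/negP => /hmax; rewrite ltnn.
move: hnot; rewrite /P sltm andbT -ltNge => hlt.
have : N%:R * g < (2:R) ^+ s.+1 * g by exact: le_lt_trans hN hlt.
by rewrite ltr_pM2r // => /ltW.
Qed.

Lemma pointwise (R : realType) n m k (C : 'I_m -> clause n) (w : nat -> R) :
  inP w -> (max_iterations k C w <= \sum_(t <- idx k C) (@GG R n m k t w)%:E)%E.
Proof.
move=> Pw; apply: ge_ereal_sup => _ [s [a0 hr] <-].
rewrite sumEFin lee_fin.
case: (eqVneq s [::]) => [->|sn]; first by rewrite sumr_ge0 // => t _; exact: GG_ge0.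
have [a [b [hab hg]]] := run_gain hr Pw sn.
have Nm := run_size hr.
move: (hab) => /andP[hk hlt].
have ab : a != b by apply/eqP => e; move: hlt; rewrite e ltxx.
have [u hu] := enum_diff hk ab.
have hsup := code_support C hu.
have g0 : 0 < weight C w b - weight C w a by rewrite subr_gt0.
have N0 : (0 < size s)%N by rewrite lt0n size_eq0.
have [sx [sm hgs hN]] := choose_s N0 Nm g0 hg.
apply: le_trans (sum_ge_term (t0 := (u, (code C a b, sx))) _ _); last 2 first.
- rewrite /idx; apply/allpairsPdep; exists u, (code C a b, sx); split => //; first by rewrite mem_enum.
  apply/allpairsP; exists (code C a b, sx); split => //; first by rewrite mem_enum.
  by rewrite mem_iota add0n ltnS.
- by move=> t; exact: GG_ge0.
rewrite /GG /= lin_code indicE.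
have -> : (weight C w b - weight C w a) \in slab (m%:R / 2 ^+ sx) by rewrite in_slab g0.
by rewrite mulr1.
Qed.

Definition jmin m (g : {ffun 'I_m -> 'I_3}) : nat :=
  find (fun i : 'I_m => val (g i) != 0%N) (enum 'I_m).

Lemma dec0 (R : realType) (g : 'I_3) : val g = 0%N -> dec R g = 0.
Proof. by rewrite /dec => ->. Qed.

Lemma dec_pm (R : realType) (g : 'I_3) : val g != 0%N -> dec R g = 1 \/ dec R g = -1.
Proof. by case: g => [[|[|[|i]]] hi] //= _; rewrite /dec /=; [left|right]. Qed.

Lemma jmin_lt m (g : {ffun 'I_m -> 'I_3}) (i : 'I_m) : (i < jmin g)%N -> val (g i) = 0%N.
Proof.
move=> h; have := before_find i h; rewrite nth_ord_enum.
by move/negbFE/eqP.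
Qed.

Lemma jmin_nz m (g : {ffun 'I_m -> 'I_3}) (h : (jmin g < m)%N) :
  val (g (Ordinal h)) != 0%N.
Proof.
have hs : has (fun i : 'I_m => val (g i) != 0%N) (enum 'I_m).
  by rewrite has_find size_enum_ord.
have := nth_find (Ordinal h) hs.
have -> : nth (Ordinal h) (enum 'I_m) (jmin g) = Ordinal h.
  by apply: val_inj; rewrite /= nth_enum_ord.
by [].
Qed.

Lemma lin_upd (R : realType) m (g : {ffun 'I_m -> 'I_3}) (w : nat -> R) j y :
  lin g (upd w j y) = lin g (upd w j 0) +
     (\sum_(i < m) (if (i == j :> nat) then dec R (g i) else 0)) * y.
Proof.
rewrite /lin mulr_suml -big_split /=; apply: eq_bigr => i _.
by rewrite /upd; case: ifP => _; rewrite ?mulr0 ?mul0r ?add0r ?addr0.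
Qed.

Lemma lin_dep (R : realType) m (g : {ffun 'I_m -> 'I_3}) (w w' : nat -> R) :
  (forall i, (jmin g <= i)%N -> w i = w' i) -> lin g w = lin g w'.
Proof.
move=> h; rewrite /lin; apply: eq_bigr => i _.
case: (ltnP i (jmin g)) => hi; first by rewrite dec0 ?mul0r // jmin_lt.
by rewrite h.
Qed.

Lemma coef_j (R : realType) m (g : {ffun 'I_m -> 'I_3}) (h : (jmin g < m)%N) :
  \sum_(i < m) (if (i == jmin g :> nat) then dec R (g i) else 0) = dec R (g (Ordinal h)).
Proof.
rewrite (bigD1 (Ordinal h)) //= eqxx big1 ?addr0 // => i hi.
case: eqP => // hv; case/eqP: hi; exact: val_inj.
Qed.

Lemma slab_meas (R : realType) (L : R) : measurable (slab L).
Proof.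
have -> : slab L = [set` (`]0%R, L]%R : interval R)]%classic.
  by apply/seteqP; split => z; rewrite /slab /= in_itv.
exact: measurable_itv.
Qed.

Lemma lin0 (R : realType) m (g : {ffun 'I_m -> 'I_3}) : lin g (fun _ => 0 : R) = 0.
Proof. by rewrite /lin big1 // => i _; rewrite mulr0. Qed.

Lemma Tset_card n m k (C : 'I_m -> clause n) (u : {ffun 'I_k -> 'I_n}) :
  (#|Tset C u| <= k * max_occurrences C)%N.
Proof.
apply: (@leq_trans (\sum_(i < k) #|occ C (u i)|)).
  rewrite /Tset; apply: (big_ind2 (fun (A : {set 'I_m}) (x : nat) => #|A| <= x)%N).
  - by rewrite cards0.
  - move=> A1 x1 A2 x2 h1 h2; apply: leq_trans (leq_card_setU A1 A2).1 _.
    exact: leq_add.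
  - by [].
rewrite -[X in (_ <= X * _)%N]card_ord -sum_nat_const; apply: leq_sum => i _.
have H := @leq_bigmax _ (fun x : 'I_n => #|[set i0 : 'I_m | x \in [seq l.1 | l <- C i0]]%classic|) (u i).
rewrite /max_occurrences; apply: leq_trans H.
apply: eq_leq; apply: eq_card => c.
rewrite inE; apply/idP/idP => [h|/set_mem //]; exact: mem_set.
Qed.

Lemma sum_cst_seq (R : realType) (I : Type) (s : seq I) (c : R) :
  \sum_(i <- s) c = (size s)%:R * c.
Proof.
elim: s => [|x s IH]; first by rewrite big_nil mul0r.
by rewrite big_cons IH /= -[(size s).+1]add1n natrD mulrDl mul1r.
Qed.

Lemma count_bound (R : realType) n m k (C : 'I_m -> clause n) (c : R) : 0 <= c ->
  \sum_(t <- idx k C) c <=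
    (n%:R ^+ k * (3%:R ^+ (k * max_occurrences C) * (m.+1%:R * c))).
Proof.
move=> c0; rewrite /idx big_allpairs_dep.
apply: (@le_trans _ _ (\sum_(u <- enum {: {ffun 'I_k -> 'I_n}})
   (3%:R ^+ (k * max_occurrences C) * (m.+1%:R * c)))); last first.
  rewrite sum_cst_seq -cardE card_ffun !card_ord natrX.
  by [].
apply: ler_sum => u _.
rewrite sum_cst_seq size_allpairs size_iota -cardE card_pffun_on natrM mulrA.
apply: ler_wpM2r => //; apply: ler_wpM2r => //.
have -> : #|[pred x : 'I_3 | predT x]| = 3%N by rewrite -[RHS](card_ord 3); apply: eq_card.
rewrite natrX ler_eXn2l ?ltr1n //.
exact: Tset_card.
Qed.

Theorem mainTheorem10 :
  exists c : nat, forall (R : realType) (n m k : nat) (C : 'I_m -> clause n)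
    (f : nat -> R -> R) (phi : R),
    (forall i, (i < m)%N -> density_bounded (f i) phi) ->
    (expect_indep m f (fun w => max_iterations k C w)
      <= (c%:R * 3 ^+ (k * max_occurrences C) * n%:R ^+ k * m%:R ^+ 2 * phi)%:E)%E.
Proof.
exists 4%N => R n m k C f phi hf.
have M0 : 0 <= 2 * m%:R * phi.
  case: (eqVneq m 0%N) => [->|mn]; first by rewrite mulr0 mul0r.
  by rewrite mulr_ge0 ?mulr_ge0 // (phi_ge0 (hf 0%N _)) // lt0n.
have step : (expect_indep m f (fun w => max_iterations k C w) <=
    \sum_(t <- idx k C) (if (m <= jmin t.2.1)%N then (@GG R n m k t (fun=> 0%R))%:E
                          else (2 * m%:R * phi)%:E))%E.
  apply: (@key R f phi _ (idx k C) (fun t => jmin t.2.1) (fun _ => 2 * m%:R * phi) m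
     (fun t w => (@GG R n m k t w)%:E)) => //.
  - by move=> t w; rewrite lee_fin; exact: GG_ge0.
  - by move=> t w w' h; rewrite /GG (lin_dep h).
  - move=> [u [g s]] w /=; rewrite /GG /=.
    set K := (2:R) ^+ s.+1; set S := slab (m%:R / 2 ^+ s).
    set c := lin g (upd w (jmin g) 0).
    set e := \sum_(i < m) (if (i == jmin g :> nat) then dec R (g i) else 0).
    have -> : (fun y => (K * \1_S (lin g (upd w (jmin g) y)))%:E) =
        (fun y => ((cst K \* (\1_S \o (cst c \+ (cst e \* id)))) y)%:E).
      by apply/funext => y; rewrite lin_upd.
    apply/measurable_EFinP; apply: measurable_funM; first exact: measurable_cst.
    apply: measurableT_comp; first exact: measurable_indic (slab_meas _).
    apply: measurable_funD; first exact: measurable_cst.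
    apply: measurable_funM; first exact: measurable_cst.
    exact: measurable_id.
  - move=> [u [g s]] w /= hj; rewrite /GG /=.
    have m0 : (0 < m)%N by apply: leq_ltn_trans hj.
    under eq_integral => y _ do rewrite lin_upd (coef_j R hj).
    apply: le_trans (@slab_bd R (f (jmin g)) phi _ _ _ _ (hf _ hj) (@dec_pm R _ (jmin_nz hj)) _ _) _.
    + by rewrite exprn_ge0.
    + by rewrite divr_gt0 ?exprn_gt0 // ltr0n.
    rewrite lee_fin exprS le_eqVlt; apply/orP; left; apply/eqP.
    field; exact: expf_neq0.
  - move=> w Pw; split; last exact: pointwise.
    apply: ereal_sup_ubound; exists [::] => //; exists [ffun => false].
    by [].
apply: le_trans step _.
apply: (@le_trans _ _ (\sum_(t <- idx k C) (2 * m%:R * phi)%:E)%E).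
  apply: lee_sum => t _; case: ifP => _ //.
  by rewrite /GG lin0 indicE in_slab ltxx /= mulr0 lee_fin.
rewrite sumEFin lee_fin.
apply: le_trans (count_bound k C M0) _.
have ha : 0 <= n%:R ^+ k :> R by rewrite exprn_ge0.
have hb : 0 <= 3 ^+ (k * max_occurrences C) :> R by rewrite exprn_ge0.
case: (eqVneq m 0%N) => [m0|mn].
  have x0 : m%:R = 0 :> R by rewrite m0.
  by rewrite x0 !(mulr0, mul0r) expr0n /= !(mulr0, mul0r).
have hphi : 0 <= phi by apply: (phi_ge0 (hf 0%N _)); rewrite lt0n.
have hx : 1 <= m%:R :> R by rewrite ler1n lt0n.
have hp := mulr_ge0 (mulr_ge0 ha hb) hphi.
have hx1 : 0 <= m%:R - 1 :> R by rewrite subr_ge0.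
have h2 := mulr_ge0 (mulr_ge0 hp (le_trans ler01 hx)) hx1.
have e1 : m.+1%:R = m%:R + 1 :> R by rewrite -addn1 natrD.
rewrite e1 -subr_ge0.
set a := n%:R ^+ k in hp h2 *; set b := 3 ^+ (k * max_occurrences C) in hp h2 *.
set x := m%:R in hp h2 hx1 *.
set T := (X in 0 <= X).
have -> : T = 2 * (a * b * phi * x * (x - 1)) by rewrite /T; ring.
by rewrite mulr_ge0.
Qed.
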